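(* $\mathbb{P}(\mathsf{FDqRA})=\mathsf{EDqRA}$ (up to isomorphism): every algebra in $\mathsf{EDqRA}$ is isomorphic to a direct product of algebras in $\mathsf{FDqRA}$, and every direct product of a family of algebras in $\mathsf{FDqRA}$ is isomorphic to an algebra in $\mathsf{EDqRA}$.
   Context: For binary relations: converse $R^\smile$; composition $R\circ S=\{(x,y)\mid\exists z\,((x,z)\in R,(z,y)\in S)\}$; functions are identified with their graphs. Order automorphism: bijection with $x\le y\iff\alpha(x)\le\alpha(y)$; dual order automorphism: bijection with $x\le y\iff\beta(y)\le\beta(x)$; self-inverse: $\beta\circ\beta=\mathrm{id}$. Let $(X,\le)$ be a poset, $E$ an equivalence relation on $X$ with ${\le}\subseteq E$, $\alpha$ an order automorphism and $\beta$ a self-inverse dual order automorphism of $(X,\le)$ with $\alpha,\beta\subseteq E$ and $\beta=\alpha\circ\beta\circ\alpha$. Order $E$ by $(u,v)\preceq(x,y)$ iff $x\le u$ and $v\le y$, write $\mathbf E=(E,\preceq)$, and let $R^c=E\setminus R$. Then $\mathbf{Dq}(\mathbf E)=\langle\mathsf{Up}(\mathbf E),\cap,\cup,\circ,1,0,{\sim},-,'\rangle$ is the algebra of up-sets of $\mathbf E$ with $1={\le}$, $0=\alpha\circ({\le}^c)^\smile$, ${\sim}R=(R^\smile\circ0^c)^c$, $-R=(0^c\circ R^\smile)^c$, $R'=\alpha\circ\beta\circ R^c\circ\beta$. $\mathsf{EDqRA}$ is the class of all such algebras $\mathbf{Dq}(\mathbf E)$ (equivalence distributive quasi relation algebras);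 $\mathsf{FDqRA}$ is the class of those with $E=X^2$ (full distributive quasi relation algebras). $\mathbb{P}(\mathsf K)$ denotes the class of direct products of families of members of $\mathsf K$. *)

(* Defs.v *)
Definition rel (X : Type) : Type := X -> X -> Prop.

Definition conv {X : Type} (R : rel X) : rel X := fun x y => R y x.
Definition rcomp {X : Type} (R S : rel X) : rel X :=
  fun x y => exists z, R x z /\ S z y.
Definition graph {X : Type} (f : X -> X) : rel X := fun x y => f x = y.
Definition idrel {X : Type} : rel X := fun x y => x = y.
Definition rcompl {X : Type} (E R : rel X) : rel X := fun x y => E x y /\ ~ R x y.
Definition rmeet {X : Type} (R S : rel X) : rel X := fun x y => R x y /\ S x y.
Definition rjoin {X : Type} (R S : rel X) : rel X := fun x y => R x y \/ S x y.
Definition fullrel {X : Type} : rel X := fun _ _ => True.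
Definition subrel {X : Type} (R S : rel X) : Prop := forall x y, R x y -> S x y.
Definition releq {X : Type} (R S : rel X) : Prop := forall x y, R x y <-> S x y.

Definition is_poset {X : Type} (le : rel X) : Prop :=
  (forall x, le x x) /\
  (forall x y, le x y -> le y x -> x = y) /\
  (forall x y z, le x y -> le y z -> le x z).

Definition is_equivalence {X : Type} (E : rel X) : Prop :=
  (forall x, E x x) /\
  (forall x y, E x y -> E y x) /\
  (forall x y z, E x y -> E y z -> E x z).

Definition is_bijection {X : Type} (f : X -> X) : Prop :=
  (forall x y, f x = f y -> x = y) /\ (forall y, exists x, f x = y).

Definition order_automorphism {X : Type} (le : rel X) (a : X -> X) : Prop :=
  is_bijection a /\ forall x y, le x y <-> le (a x) (a y).

Definition dual_order_automorphism {X : Type} (le : rel X) (b : X -> X) : Prop :=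
  is_bijection b /\ forall x y, le x y <-> le (b y) (b x).

Definition self_inverse {X : Type} (b : X -> X) : Prop :=
  releq (rcomp (graph b) (graph b)) idrel.

Definition DqFrame (X : Type) (le : rel X) (E : rel X) (alpha beta : X -> X) : Prop :=
  is_poset le /\
  is_equivalence E /\
  subrel le E /\
  order_automorphism le alpha /\
  dual_order_automorphism le beta /\
  self_inverse beta /\
  subrel (graph alpha) E /\
  subrel (graph beta) E /\
  releq (graph beta) (rcomp (rcomp (graph alpha) (graph beta)) (graph alpha)).

Definition Eprec {X : Type} (le : rel X) (u v x y : X) : Prop := le x u /\ le v y.

Definition is_upset {X : Type} (le E : rel X) (R : rel X) : Prop :=
  subrel R E /\
  (forall u v x y, R u v -> E x y -> Eprec le u v x y -> R x y).

(** An algebra is presented by an ambient type [car] together with a predicate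
    [mem] singling out the elements of the algebra; the operations are given on
    the ambient type (and, by the paper, preserve [mem]). *)
Record Alg : Type := MkAlg {
  car : Type;
  mem : car -> Prop;
  a_meet : car -> car -> car;
  a_join : car -> car -> car;
  a_comp : car -> car -> car;
  a_one : car;
  a_zero : car;
  a_tilde : car -> car;
  a_minus : car -> car;
  a_prime : car -> car
}.

Definition Alg_iso (A B : Alg) : Prop :=
  exists f : car A -> car B,
    (forall x, mem A x -> mem B (f x)) /\
    (forall x y, mem A x -> mem A y -> f x = f y -> x = y) /\
    (forall y, mem B y -> exists x, mem A x /\ f x = y) /\
    (forall x y, mem A x -> mem A y -> f (a_meet A x y) = a_meet B (f x) (f y)) /\
    (forall x y, mem A x -> mem A y -> f (a_join A x y) = a_join B (f x) (f y)) /\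
    (forall x y, mem A x -> mem A y -> f (a_comp A x y) = a_comp B (f x) (f y)) /\
    f (a_one A) = a_one B /\
    f (a_zero A) = a_zero B /\
    (forall x, mem A x -> f (a_tilde A x) = a_tilde B (f x)) /\
    (forall x, mem A x -> f (a_minus A x) = a_minus B (f x)) /\
    (forall x, mem A x -> f (a_prime A x) = a_prime B (f x)).

Definition Alg_prod (I : Type) (F : I -> Alg) : Alg :=
  {| car := forall i, car (F i);
     mem := fun x => forall i, mem (F i) (x i);
     a_meet := fun x y i => a_meet (F i) (x i) (y i);
     a_join := fun x y i => a_join (F i) (x i) (y i);
     a_comp := fun x y i => a_comp (F i) (x i) (y i);
     a_one := fun i => a_one (F i);
     a_zero := fun i => a_zero (F i);
     a_tilde := fun x i => a_tilde (F i) (x i);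
     a_minus := fun x i => a_minus (F i) (x i);
     a_prime := fun x i => a_prime (F i) (x i) |}.

Section Dq.
Context {X : Type} (le E : rel X) (alpha beta : X -> X).

Definition Dq_one : rel X := le.
Definition Dq_zero : rel X := rcomp (graph alpha) (conv (rcompl E le)).
Definition Dq_tilde (R : rel X) : rel X :=
  rcompl E (rcomp (conv R) (rcompl E Dq_zero)).
Definition Dq_minus (R : rel X) : rel X :=
  rcompl E (rcomp (rcompl E Dq_zero) (conv R)).
Definition Dq_prime (R : rel X) : rel X :=
  rcomp (rcomp (rcomp (graph alpha) (graph beta)) (rcompl E R)) (graph beta).
End Dq.

Definition Dq (X : Type) (le E : rel X) (alpha beta : X -> X) : Alg :=
  {| car := rel X;
     mem := is_upset le E;
     a_meet := @rmeet X;
     a_join := @rjoin X;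
     a_comp := @rcomp X;
     a_one := Dq_one le;
     a_zero := Dq_zero le E alpha;
     a_tilde := Dq_tilde le E alpha;
     a_minus := Dq_minus le E alpha;
     a_prime := Dq_prime E alpha beta |}.

(* Main.v *)
Require Import Defs.
From Stdlib Require Import FunctionalExtensionality PropExtensionality ProofIrrelevance.

Lemma rel_ext {Z : Type} (R S : rel Z) : (forall x y, R x y <-> S x y) -> R = S.
Proof.
  intros H; apply functional_extensionality; intro x;
  apply functional_extensionality; intro y; apply propositional_extensionality; auto.
Qed.

Lemma releq_char {Z : Type} (a b : Z -> Z) :
  releq (graph b) (rcomp (rcomp (graph a) (graph b)) (graph a)) <->
  forall x, b x = a (b (a x)).
Proof.
  unfold releq, graph, rcomp; split.
  - intros H x. destruct (H x (b x)) as [H1 _].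
    destruct (H1 eq_refl) as [z [[w [e1 e2]] e3]]. subst. auto.
  - intros H x y; split.
    + intros <-. exists (b (a x)); split; [exists (a x); auto | auto].
    + intros [z [[w [e1 e2]] e3]]. subst. auto.
Qed.

Lemma selfinv_char {Z : Type} (b : Z -> Z) :
  self_inverse b <-> forall x, b (b x) = x.
Proof.
  unfold self_inverse, releq, rcomp, graph, idrel; split.
  - intros H x. destruct (H x x) as [_ H2]. destruct (H2 eq_refl) as [z [<- e]]. auto.
  - intros H x y; split.
    + intros [z [<- <-]]. auto.
    + intros <-. exists (b x); auto.
Qed.

Section P2.
Variables (Idx : Type) (Y : Idx -> Type) (leY : forall i, rel (Y i))
          (alY beY : forall i, Y i -> Y i).
Hypothesis HY : forall i, DqFrame (Y i) (leY i) fullrel (alY i) (beY i).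

Definition X2 := sigT Y.
Definition lift (R : forall i, rel (Y i)) : rel X2 :=
  fun p q => exists i a b, p = existT Y i a /\ q = existT Y i b /\ R i a b.
Definition le2 := lift leY.
Definition E2 : rel X2 := fun p q => projT1 p = projT1 q.
Definition map2 (f : forall i, Y i -> Y i) (p : X2) : X2 :=
  existT Y (projT1 p) (f _ (projT2 p)).

Lemma lift_iff R i a b : lift R (existT Y i a) (existT Y i b) <-> R i a b.
Proof.
  split.
  - intros [j [a' [b' [e1 [e2 r]]]]].
    assert (i = j) by exact (f_equal (@projT1 _ _) e1). subst j.
    apply inj_pair2 in e1; apply inj_pair2 in e2; subst; auto.
  - intros r; exists i, a, b; auto.
Qed.

Lemma lift_E R p q : lift R p q -> E2 p q.
Proof. intros [i [a [b [-> [-> _]]]]]; reflexivity. Qed.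

Lemma L_comp R S : rcomp (lift R) (lift S) = lift (fun i => rcomp (R i) (S i)).
Proof.
  apply rel_ext; intros [i a] [j b]; split.
  - intros [[k z] [h1 h2]].
    pose proof (lift_E _ _ _ h1) as e1; pose proof (lift_E _ _ _ h2) as e2.
    unfold E2 in *; simpl in *; subst.
    apply lift_iff in h1; apply lift_iff in h2. apply lift_iff. exists z; auto.
  - intros h. pose proof (lift_E _ _ _ h) as e; unfold E2 in e; simpl in e; subst.
    apply lift_iff in h. destruct h as [z [h1 h2]].
    exists (existT Y j z); split; apply lift_iff; auto.
Qed.

Lemma L_conv R : conv (lift R) = lift (fun i => conv (R i)).
Proof.
  apply rel_ext; intros [i a] [j b]; unfold conv; split; intro h;
  pose proof (lift_E _ _ _ h) as e; unfold E2 in e; simpl in e; subst;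
  apply lift_iff in h; apply lift_iff; auto.
Qed.

Lemma L_compl R : rcompl E2 (lift R) = lift (fun i => rcompl fullrel (R i)).
Proof.
  apply rel_ext; intros [i a] [j b]; unfold rcompl; split.
  - intros [e h]. unfold E2 in e; simpl in e; subst.
    apply lift_iff. split; [exact I|]. intro r; apply h, lift_iff; auto.
  - intro h. pose proof (lift_E _ _ _ h) as e; unfold E2 in e; simpl in e; subst.
    apply lift_iff in h. destruct h as [_ h]. split; [reflexivity|].
    intro r; apply h, lift_iff; auto.
Qed.

Lemma L_graph f : graph (map2 f) = lift (fun i => graph (f i)).
Proof.
  apply rel_ext; intros [i a] [j b]; unfold graph, map2; simpl; split.
  - intro e. pose proof (f_equal (@projT1 _ _) e) as e'; simpl in e'; subst.
    apply inj_pair2 in e. apply lift_iff; auto.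
  - intro h. pose proof (lift_E _ _ _ h) as e; unfold E2 in e; simpl in e; subst.
    apply lift_iff in h. subst; auto.
Qed.

Lemma L_meet R S : rmeet (lift R) (lift S) = lift (fun i => rmeet (R i) (S i)).
Proof.
  apply rel_ext; intros [i a] [j b]; unfold rmeet; split.
  - intros [h1 h2]. pose proof (lift_E _ _ _ h1) as e; unfold E2 in e; simpl in e; subst.
    apply lift_iff in h1; apply lift_iff in h2; apply lift_iff; auto.
  - intro h. pose proof (lift_E _ _ _ h) as e; unfold E2 in e; simpl in e; subst.
    apply lift_iff in h; destruct h; split; apply lift_iff; auto.
Qed.

Lemma L_join R S : rjoin (lift R) (lift S) = lift (fun i => rjoin (R i) (S i)).
Proof.
  apply rel_ext; intros [i a] [j b]; unfold rjoin; split.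
  - intros [h|h]; pose proof (lift_E _ _ _ h) as e; unfold E2 in e; simpl in e; subst;
    apply lift_iff in h; apply lift_iff; auto.
  - intro h. pose proof (lift_E _ _ _ h) as e; unfold E2 in e; simpl in e; subst.
    apply lift_iff in h; destruct h; [left|right]; apply lift_iff; auto.
Qed.

Lemma map2_inj f : (forall i x y, f i x = f i y -> x = y) ->
  forall p q, map2 f p = map2 f q -> p = q.
Proof.
  intros H [i a] [j b]; unfold map2; simpl; intro e.
  pose proof (f_equal (@projT1 _ _) e) as e'; simpl in e'; subst.
  apply inj_pair2 in e. apply H in e; subst; auto.
Qed.

Lemma map2_surj f : (forall i y, exists x, f i x = y) -> forall q, exists p, map2 f q = q \/ map2 f p = q.
Proof. Abort.

Lemma map2_surj f : (forall i y, exists x, f i x = y) -> forall q, exists p, map2 f p = q.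
Proof.
  intros H [i b]. destruct (H i b) as [a e]. exists (existT Y i a); unfold map2; simpl; subst; auto.
Qed.

Lemma frame2 : DqFrame X2 le2 E2 (map2 alY) (map2 beY).
Proof.
  assert (P : forall i, is_poset (leY i)) by (intro i; apply HY).
  assert (A : forall i, order_automorphism (leY i) (alY i)) by (intro i; apply HY).
  assert (B : forall i, dual_order_automorphism (leY i) (beY i)) by (intro i; apply HY).
  assert (S : forall i x, beY i (beY i x) = x) by (intro i; apply selfinv_char; apply HY).
  assert (R : forall i x, beY i x = alY i (beY i (alY i x))) by (intro i; apply releq_char; apply HY).
  unfold DqFrame.
  split; [split; [|split]|].
  { intros [i a]; apply lift_iff, P. }
  { intros [i a] [j b] h1 h2.
    pose proof (lift_E _ _ _ h1) as e; unfold E2 in e; simpl in e; subst.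
    apply lift_iff in h1; apply lift_iff in h2. f_equal. apply (P j); auto. }
  { intros [i a] [j b] [k c] h1 h2.
    pose proof (lift_E _ _ _ h1) as e; unfold E2 in e; simpl in e; subst.
    pose proof (lift_E _ _ _ h2) as e; unfold E2 in e; simpl in e; subst.
    apply lift_iff in h1; apply lift_iff in h2; apply lift_iff. eapply (P k); eauto. }
  split; [split; [|split]|].
  { intros; unfold E2 in *; congruence. }
  { intros; unfold E2 in *; congruence. }
  { intros; unfold E2 in *; congruence. }
  split; [intros x y h; apply lift_E in h; auto|].
  split; [split; [split|]|].
  { apply map2_inj. intro i; apply (A i). }
  { apply map2_surj. intro i; apply (A i). }
  { intros [i a] [j b]; split; intro h;
    [pose proof (lift_E _ _ _ h) as e | pose proof (lift_E _ _ _ h) as e];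
    unfold E2, map2 in e; simpl in e; subst; unfold map2 in *; simpl in *;
    apply lift_iff in h; apply lift_iff; first [exact (proj1 (proj2 (A _) _ _) h) | exact (proj2 (proj2 (A _) _ _) h)]. }
  split; [split; [split|]|].
  { apply map2_inj. intro i; apply (B i). }
  { apply map2_surj. intro i; apply (B i). }
  { intros [i a] [j b]; split; intro h;
    [pose proof (lift_E _ _ _ h) as e | pose proof (lift_E _ _ _ h) as e];
    unfold E2, map2 in e; simpl in e; subst; unfold map2 in *; simpl in *;
    apply lift_iff in h; apply lift_iff; first [exact (proj1 (proj2 (B _) _ _) h) | exact (proj2 (proj2 (B _) _ _) h)]. }
  split; [apply selfinv_char; intros [i a]; unfold map2; simpl; rewrite S; auto|].
  split; [intros x y <-; reflexivity|].
  split; [intros x y <-; reflexivity|].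
  apply releq_char. intros [i a]; unfold map2; simpl. rewrite <- R; auto.
Qed.

Lemma iso2 : Alg_iso (Alg_prod Idx (fun i => Dq (Y i) (leY i) fullrel (alY i) (beY i)))
                     (Dq X2 le2 E2 (map2 alY) (map2 beY)).
Proof.
  exists lift. cbn.
  refine (conj _ (conj _ (conj _ (conj _ (conj _ (conj _ (conj _ (conj _ (conj _ (conj _ _)))))))))).
  - intros x Hx. split; [intros p q h; apply lift_E in h; auto|].
    intros u v x0 y h e [h1 h2].
    destruct u as [i a], v as [j b], x0 as [k c], y as [l d].
    pose proof (lift_E _ _ _ h) as e'; unfold E2 in e'; simpl in e'; subst.
    pose proof (lift_E _ _ _ h1) as e'; unfold E2 in e'; simpl in e'; subst.
    pose proof (lift_E _ _ _ h2) as e'; unfold E2 in e'; simpl in e'; subst.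
    apply lift_iff in h; apply lift_iff in h1; apply lift_iff in h2; apply lift_iff.
    eapply (proj2 (Hx l)); eauto. exact I. split; auto.
  - intros x y _ _ e. apply functional_extensionality_dep; intro i.
    apply rel_ext; intros a b.
    rewrite <- (lift_iff x), <- (lift_iff y), e. tauto.
  - intros Q [HQ1 HQ2].
    exists (fun i a b => Q (existT Y i a) (existT Y i b)). split.
    + intro i; split; [intros ? ? ?; exact I|].
      intros u v x y h _ [h1 h2]. eapply HQ2; eauto. reflexivity.
      split; apply lift_iff; auto.
    + apply rel_ext; intros [i a] [j b]; split.
      * intros [k [c [d [e1 [e2 r]]]]]. rewrite e1, e2; auto.
      * intro h. pose proof (HQ1 _ _ h) as e; unfold E2 in e; simpl in e; subst.
        exists j, a, b; auto.
  - intros; symmetry; apply L_meet.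
  - intros; symmetry; apply L_join.
  - intros; symmetry; apply L_comp.
  - reflexivity.
  - unfold Dq_zero. unfold le2. repeat first [rewrite L_graph | rewrite L_compl | rewrite L_conv | rewrite L_comp]; reflexivity.
  - intros x _. unfold Dq_tilde, Dq_zero. unfold le2.
    repeat first [rewrite L_graph | rewrite L_compl | rewrite L_conv | rewrite L_comp]; reflexivity.
  - intros x _. unfold Dq_minus, Dq_zero. unfold le2.
    repeat first [rewrite L_graph | rewrite L_compl | rewrite L_conv | rewrite L_comp]; reflexivity.
  - intros x _. unfold Dq_prime.
    repeat first [rewrite L_graph | rewrite L_compl | rewrite L_conv | rewrite L_comp]; reflexivity.
Qed.
End P2.

Lemma sig_eq {A : Type} (P : A -> Prop) (x y : sig P) : proj1_sig x = proj1_sig y -> x = y.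
Proof. destruct x as [x hx], y as [y hy]; simpl; intros ->; f_equal; apply proof_irrelevance. Qed.

Section P1.
Variables (X : Type) (le E : rel X) (alpha beta : X -> X).
Hypothesis H : DqFrame X le E alpha beta.

Ltac dH := destruct H as (Hpo & (Er & Es & Et) & HleE & HA & HB & HS & HaE & HbE & HR).
Lemma Eref x : E x x. Proof. dH; auto. Qed.
Lemma Esym x y : E x y -> E y x. Proof. dH; auto. Qed.
Lemma Etr x y z : E x y -> E y z -> E x z. Proof. dH; eauto. Qed.
Lemma leE x y : le x y -> E x y. Proof. dH; auto. Qed.
Lemma aE x : E x (alpha x). Proof. dH; apply HaE; reflexivity. Qed.
Lemma bE x : E x (beta x). Proof. dH; apply HbE; reflexivity. Qed.

Definition I1 := {C : X -> Prop | exists x, C = E x}.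
Definition Y1 (C : I1) := {y : X | proj1_sig C y}.

Lemma cl_closed (C : I1) y z : proj1_sig C y -> E y z -> proj1_sig C z.
Proof. destruct C as [P [p ->]]; simpl; intros; eapply Etr; eauto. Qed.
Lemma cl_E (C : I1) y z : proj1_sig C y -> proj1_sig C z -> E y z.
Proof. destruct C as [P [p ->]]; simpl; intros; eapply Etr; eauto using Esym. Qed.

Lemma cls_unique (C C' : I1) x : proj1_sig C x -> proj1_sig C' x -> C = C'.
Proof.
  destruct C as [P [p eP]], C' as [P' [p' eP']]; simpl; intros h h'.
  apply sig_eq; simpl. subst P P'.
  apply functional_extensionality; intro z; apply propositional_extensionality.
  split; intro k.
  - eapply Etr; [|exact k]. eapply Etr; [exact h'|]. apply Esym; auto.
  - eapply Etr; [|exact k]. eapply Etr; [exact h|]. apply Esym; auto.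
Qed.

Definition res (R : rel X) (C : I1) : rel (Y1 C) :=
  fun a b => R (proj1_sig a) (proj1_sig b).
Definition smap (f : X -> X) (Hf : forall x, E x (f x)) (C : I1) (a : Y1 C) : Y1 C :=
  exist _ (f (proj1_sig a)) (cl_closed C _ _ (proj2_sig a) (Hf _)).
Definition al1 C := smap alpha aE C.
Definition be1 C := smap beta bE C.
Definition le1 C := res le C.

Lemma smap_bij f Hf C : is_bijection f -> is_bijection (smap f Hf C).
Proof.
  intros [Hi Hs]; split.
  - intros a b e. apply (f_equal (@proj1_sig _ _)) in e; simpl in e.
    apply sig_eq; auto.
  - intro y. destruct (Hs (proj1_sig y)) as [x e].
    assert (Cx : proj1_sig C x).
    { apply (cl_closed C (proj1_sig y)); [apply proj2_sig|]. apply Esym. rewrite <- e. apply Hf. }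
    exists (exist _ x Cx). apply sig_eq; simpl; auto.
Qed.

Lemma frame1 C : DqFrame (Y1 C) (le1 C) fullrel (al1 C) (be1 C).
Proof.
  destruct H as (Hpo & Heq & HleE & HA & HB & HS & HaE & HbE & HR).
  destruct Hpo as (Pr & Pa & Pt).
  pose proof (proj1 (selfinv_char beta) HS) as HS0; pose proof (proj1 (releq_char alpha beta) HR) as HR0; clear HS HR; rename HS0 into HS; rename HR0 into HR.
  unfold DqFrame.
  split; [split; [|split]|].
  { intro a; apply Pr. }
  { intros a b h1 h2; apply sig_eq; apply Pa; auto. }
  { intros a b c h1 h2; eapply Pt; eauto. }
  split; [split; [|split]; intros; exact I|].
  split; [intros ? ? ?; exact I|].
  split; [split; [apply smap_bij, HA|]|].
  { intros a b; apply HA. }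
  split; [split; [apply smap_bij, HB|]|].
  { intros a b; apply HB. }
  split; [apply selfinv_char; intro a; apply sig_eq; simpl; apply HS|].
  split; [intros ? ? ?; exact I|].
  split; [intros ? ? ?; exact I|].
  apply releq_char; intro a; apply sig_eq; simpl; apply HR.
Qed.

Lemma res_comp R S C : subrel R E -> res (rcomp R S) C = rcomp (res R C) (res S C).
Proof.
  intro HR. apply rel_ext; intros a b; unfold res, rcomp; split.
  - intros [z [h1 h2]].
    assert (Cz : proj1_sig C z) by (eapply cl_closed; [apply (proj2_sig a)|]; eauto).
    exists (exist _ z Cz); auto.
  - intros [z [h1 h2]]; exists (proj1_sig z); auto.
Qed.

Lemma res_compl R C : res (rcompl E R) C = rcompl fullrel (res R C).
Proof.
  apply rel_ext; intros a b; unfold res, rcompl, fullrel; split.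
  - intros [_ h]; split; auto.
  - intros [_ h]; split; auto. apply cl_E with C; apply proj2_sig.
Qed.

Lemma res_graph f Hf C : res (graph f) C = graph (smap f Hf C).
Proof.
  apply rel_ext; intros a b; unfold res, graph, smap; split.
  - intro e; apply sig_eq; simpl; auto.
  - intro e; subst b; reflexivity.
Qed.

Lemma sub_comp R S : subrel R E -> subrel S E -> subrel (rcomp R S) E.
Proof. intros h1 h2 x y [z [a b]]; eapply Etr; eauto. Qed.
Lemma sub_compl R : subrel (rcompl E R) E.
Proof. intros x y [h _]; auto. Qed.
Lemma sub_conv R : subrel R E -> subrel (conv R) E.
Proof. intros h x y k; apply Esym, h, k. Qed.
Lemma sub_ga : subrel (graph alpha) E.
Proof. intros x y <-; apply aE. Qed.
Lemma sub_gb : subrel (graph beta) E.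
Proof. intros x y <-; apply bE. Qed.
Lemma sub_zero : subrel (Dq_zero le E alpha) E.
Proof. unfold Dq_zero. apply sub_comp; [apply sub_ga|apply sub_conv, sub_compl]. Qed.

Ltac solve_sub := repeat match goal with
  | |- subrel (rcomp _ _) E => apply sub_comp
  | |- subrel (rcompl E _) E => apply sub_compl
  | |- subrel (conv _) E => apply sub_conv
  | |- subrel (graph alpha) E => apply sub_ga
  | |- subrel (graph beta) E => apply sub_gb
  | |- subrel (Dq_zero le E alpha) E => apply sub_zero
  | h : subrel ?R E |- subrel ?R E => exact h
  end.

Lemma res_zero C : res (Dq_zero le E alpha) C = Dq_zero (le1 C) fullrel (al1 C).
Proof.
  unfold Dq_zero. rewrite res_comp by solve_sub. rewrite (res_graph alpha aE).
  change (res (conv (rcompl E le)) C) with (conv (res (rcompl E le) C)).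
  rewrite res_compl. reflexivity.
Qed.

Lemma iso1 : Alg_iso (Dq X le E alpha beta)
               (Alg_prod I1 (fun C => Dq (Y1 C) (le1 C) fullrel (al1 C) (be1 C))).
Proof.
  exists (fun R C => res R C). cbn.
  refine (conj _ (conj _ (conj _ (conj _ (conj _ (conj _ (conj _ (conj _ (conj _ (conj _ _)))))))))).
  - intros R [HR1 HR2] C. split; [intros ? ? ?; exact I|].
    intros u v x y h _ [h1 h2]. unfold res in *.
    apply (HR2 _ _ _ _ h); [apply cl_E with C; apply proj2_sig | split; auto].
  - intros R S [HR1 _] [HS1 _] e. apply rel_ext; intros x y.
    pose (C := exist (fun P => exists z, P = E z) (E x) (ex_intro _ x eq_refl) : I1).
    assert (Cx : proj1_sig C x) by apply Eref.
    split; intro h.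
    + assert (Cy : proj1_sig C y) by (apply HR1; auto).
      pose proof (f_equal (fun F => F C (exist _ x Cx) (exist _ y Cy)) e) as e'.
      simpl in e'. unfold res in e'; simpl in e'. rewrite <- e'; auto.
    + assert (Cy : proj1_sig C y) by (apply HS1; auto).
      pose proof (f_equal (fun F => F C (exist _ x Cx) (exist _ y Cy)) e) as e'.
      simpl in e'. unfold res in e'; simpl in e'. rewrite e'; auto.
  - intros g Hg.
    exists (fun x y => exists (C : I1) (a b : Y1 C),
               proj1_sig a = x /\ proj1_sig b = y /\ g C a b).
    split.
    + split.
      * intros x y [C [a [b [<- [<- _]]]]]. apply cl_E with C; apply proj2_sig.
      * intros u v x y [C [a [b [ea [eb r]]]]] exy [h1 h2]. subst u v.
        assert (Cx : proj1_sig C x) by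
          (apply (cl_closed C (proj1_sig a)); [apply proj2_sig | apply Esym, leE; auto]).
        assert (Cy : proj1_sig C y) by
          (apply (cl_closed C (proj1_sig b)); [apply proj2_sig | apply leE; auto]).
        exists C, (exist _ x Cx), (exist _ y Cy). split; [reflexivity|split;[reflexivity|]].
        apply (proj2 (Hg C) a b); [auto | exact I | split; auto].
    + apply functional_extensionality_dep; intro C; apply rel_ext; intros a b; split.
      * intros [C' [a' [b' [ea [eb r]]]]].
        assert (C' = C) by
          (apply (cls_unique C' C (proj1_sig a)); [rewrite <- ea; apply proj2_sig | apply proj2_sig]).
        subst C'.
        assert (a' = a) by (apply sig_eq; auto).
        assert (b' = b) by (apply sig_eq; auto).
        subst; auto.
      * intro r; exists C, a, b; auto.
  - intros; reflexivity.
  - intros; reflexivity.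
  - intros R S [HR _] _. apply functional_extensionality_dep; intro C.
    apply res_comp; auto.
  - reflexivity.
  - apply functional_extensionality_dep; intro C. apply res_zero.
  - intros R [HR _]. apply functional_extensionality_dep; intro C.
    unfold Dq_tilde. rewrite res_compl, res_comp by solve_sub.
    change (res (conv R) C) with (conv (res R C)).
    rewrite res_compl, res_zero. reflexivity.
  - intros R [HR _]. apply functional_extensionality_dep; intro C.
    unfold Dq_minus. rewrite res_compl, res_comp by solve_sub.
    change (res (conv R) C) with (conv (res R C)).
    rewrite res_compl, res_zero. reflexivity.
  - intros R [HR _]. apply functional_extensionality_dep; intro C.
    unfold Dq_prime.
    rewrite res_comp by solve_sub. rewrite res_comp by solve_sub.
    rewrite res_comp by solve_sub.
    rewrite (res_graph alpha aE), (res_graph beta bE), res_compl. reflexivity.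
Qed.
End P1.

Theorem theorem4p4 :
  (* every algebra in EDqRA is isomorphic to a direct product of FDqRAs *)
  (forall (X : Type) (le E : rel X) (alpha beta : X -> X),
     DqFrame X le E alpha beta ->
     exists (I : Type) (Y : I -> Type) (leY : forall i, rel (Y i))
            (alY beY : forall i, Y i -> Y i),
       (forall i, DqFrame (Y i) (leY i) fullrel (alY i) (beY i)) /\
       Alg_iso (Dq X le E alpha beta)
               (Alg_prod I (fun i => Dq (Y i) (leY i) fullrel (alY i) (beY i))))
  /\
  (* every direct product of FDqRAs is isomorphic to an EDqRA *)
  (forall (I : Type) (Y : I -> Type) (leY : forall i, rel (Y i))
          (alY beY : forall i, Y i -> Y i),
     (forall i, DqFrame (Y i) (leY i) fullrel (alY i) (beY i)) ->
     exists (X : Type) (le E : rel X) (alpha beta : X -> X),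
       DqFrame X le E alpha beta /\
       Alg_iso (Alg_prod I (fun i => Dq (Y i) (leY i) fullrel (alY i) (beY i)))
               (Dq X le E alpha beta)).
Proof.
  split.
  - intros X le E alpha beta H.
    do 5 eexists; split; [| apply (iso1 X le E alpha beta H)].
    intro i; apply frame1.
  - intros I Y leY alY beY HY.
    exists (X2 I Y), (le2 I Y leY), (E2 I Y), (map2 I Y alY), (map2 I Y beY).
    split; [apply frame2 | apply iso2]; auto.
Qed.
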